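(* Let $\delta$ be a non-null classifier and $t\ge0$. For each $\beta\in\{0,1\}$, the maximizer of the conditional payoff $V_\beta(r)$ over $r\in\mathbb{R}$ is $r^*_\beta=k^*_\beta(t,F)/\rho(\delta,\phi)$, where $k_0^*=k_0^*(t,F)$ and $k_1^*=k_1^*(t,F)$ are defined implicitly by $k_0^*=t-\frac{F(k_0^* )}{f(k_0^* )}$ and $k_1^*=t+\frac{1-F(k_1^* )}{f(k_1^* )}$. In particular these two values do not depend on the individual's cost $\gamma_i$.
   Context: Individuals have privately known costs $\gamma_i\in\mathbb{R}$ of choosing $\beta_i=1$ (compliance) rather than $\beta_i=0$, distributed according to a continuously differentiable CDF $F$ with log-concave density $f$ of full support on $\mathbb{R}$. A classifier $\delta=(\delta_1,\delta_0)\in[0,1]^2$ assigns $d_i\in\{0,1\}$ with $\Pr[d_i=s_i\mid s_i]=\delta_{s_i}$, where $\Pr[s_i=\beta_i]=\phi\in(\tfrac12,1]$. Let $\rho=\rho(\delta,\phi)=(\delta_1+\delta_0-1)(2\phi-1)$; $\delta$ is non-null if $\rho\ne0$. Individuals with $d_i=1$ receive reward $r$, financed by an equal tax on everyone (budget balance), and each gets $t\cdot\pi$ where $\pi=F(r\rho)$ is the compliance rate (individuals comply iff $\gamma_i\le r\rho$). Conditional payoffs: $V_1(r)=-\gamma_i+r\rho(1-F(r\rho))+tF(r\rho)$ (complying) and $V_0(r)=-r\rho F(r\rho)+tF(r\rho)$ (not complying). *)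

(* Defs.v *)
From Stdlib Require Import Reals.
From Coquelicot Require Import Coquelicot.
Open Scope R_scope.

Definition rho (d1 d0 phi : R) : R := (d1 + d0 - 1) * (2 * phi - 1).

Definition log_concave (f : R -> R) : Prop :=
  forall x y l, 0 <= l <= 1 ->
    l * ln (f x) + (1 - l) * ln (f y) <= ln (f (l * x + (1 - l) * y)).

Definition cdf_with_logconcave_density (F f : R -> R) : Prop :=
  (forall x, is_derive F x (f x)) /\
  (forall x, continuous f x) /\
  (forall x, 0 < f x) /\
  is_lim F m_infty 0 /\
  is_lim F p_infty 1 /\
  log_concave f.

Definition V1 (F : R -> R) (t rh gamma : R) (r : R) : R :=
  - gamma + r * rh * (1 - F (r * rh)) + t * F (r * rh).

Definition V0 (F : R -> R) (t rh : R) (r : R) : R :=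
  - r * rh * F (r * rh) + t * F (r * rh).

Definition is_unique_maximizer (V : R -> R) (r : R) : Prop :=
  forall r', V r' <= V r /\ (V r' = V r -> r' = r).

(* Main.v *)
Require Import Defs.
From Stdlib Require Import Reals.
From Coquelicot Require Import Coquelicot.
From Stdlib Require Import Lra Psatz.
Open Scope R_scope.

Lemma log4 (f : R -> R) : log_concave f -> (forall x, 0 < f x) ->
  forall s x d, s <= x -> 0 <= d -> f s * f (x+d) <= f (s+d) * f x.
Proof.
  intros lc fp s x d hs hd.
  destruct (Req_dec (x + d - s) 0) as [E|E].
  { assert (d = 0) by lra. assert (x = s) by lra. subst. rewrite Rplus_0_r. lra. }
  set (L := x + d - s).
  assert (L > 0) by (unfold L; lra).
  set (la := (x - s) / L).
  assert (Hla : 0 <= la <= 1).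
  { unfold la; split. apply Rdiv_le_0_compat; lra.
    apply (Rmult_le_reg_r L); [lra|]. unfold Rdiv; rewrite Rmult_assoc, Rinv_l; unfold L in *; lra. }
  assert (Hla2 : 0 <= 1 - la <= 1) by lra.
  pose proof (lc s (x+d) la Hla) as H1.
  pose proof (lc s (x+d) (1 - la) Hla2) as H3.
  replace (la * s + (1 - la) * (x + d)) with (s + d) in H1
    by (unfold la, L; field; lra).
  replace ((1 - la) * s + (1 - (1 - la)) * (x + d)) with x in H3
    by (unfold la, L; field; lra).
  assert (ln (f s * f (x + d)) <= ln (f (s + d) * f x)).
  { rewrite !ln_mult; try apply fp. nra. }
  destruct (Rle_or_lt (f s * f (x + d)) (f (s + d) * f x)) as [|Hl]; auto.
  apply ln_increasing in Hl; [lra|].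
  pose proof (fp (s+d)); pose proof (fp x); nra.
Qed.

Lemma Fmono (F f : R -> R) : (forall x, is_derive F x (f x)) -> (forall x, 0 < f x) ->
  forall x y, x < y -> F x < F y.
Proof.
  intros dF fp x y hxy.
  destruct (MVT_cor2 F f x y hxy) as [c [E _]].
  { intros c _. apply is_derive_Reals, dF. }
  pose proof (fp c). nra.
Qed.

Lemma Fpos (F f : R -> R) : (forall x, is_derive F x (f x)) -> (forall x, 0 < f x) ->
  (forall eps, 0 < eps -> exists M, forall s, s < M -> Rabs (F s) < eps) ->
  forall x, 0 < F x.
Proof.
  intros dF fp lim x.
  assert (G : forall y, 0 <= F y).
  { intro y. destruct (Rle_or_lt 0 (F y)) as [|Hy]; auto.
    destruct (lim (- F y)) as [M HM]; [lra|].
    set (s := Rmin M y - 1).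
    assert (s < M) by (unfold s; pose proof (Rmin_l M y); lra).
    assert (s < y) by (unfold s; pose proof (Rmin_r M y); lra).
    pose proof (HM s H). pose proof (Fmono F f dF fp s y H0).
    apply Rabs_def2 in H1. lra. }
  pose proof (Fmono F f dF fp (x-1) x ltac:(lra)). pose proof (G (x-1)). lra.
Qed.

Lemma ratio_mono (F f : R -> R) : (forall x, is_derive F x (f x)) -> (forall x, 0 < f x) ->
  log_concave f ->
  (forall eps, 0 < eps -> exists M, forall s, s < M -> Rabs (F s) < eps) ->
  forall x y, x <= y -> F x * f y <= F y * f x.
Proof.
  intros dF fp lc lim x y hxy.
  set (d := y - x).
  set (phi := fun s => F (s + d) * f x - F s * f y).
  assert (Hphi : phi x = F y * f x - F x * f y) by (unfold phi, d; replace (x + (y-x)) with y by ring; ring).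
  destruct (Rle_or_lt (F x * f y) (F y * f x)) as [|Hc]; auto.
  exfalso.
  set (e := F x * f y - F y * f x).
  pose proof (fp x) as fx; pose proof (fp y) as fy.
  destruct (lim (e / (f x + f y))) as [M HM].
  { unfold e; apply Rdiv_lt_0_compat; lra. }
  set (s := Rmin x (M - d) - 1).
  assert (s < x) by (unfold s; pose proof (Rmin_l x (M-d)); lra).
  assert (s + d < M) by (unfold s; pose proof (Rmin_r x (M-d)); lra).
  assert (0 <= d) by (unfold d; lra).
  assert (s < M) by lra.
  assert (phi s <= phi x).
  { destruct (MVT_cor2 phi (fun c => f (c + d) * f x - f c * f y) s x H) as [c [E Hc2]].
    { intros c Hc1. apply is_derive_Reals. unfold phi.
      auto_derive.
      - split; [exists (f (c+d)); apply dF|]. split; [exists (f c); apply dF|]. easy.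
      - assert (DF: forall z, Derive (fun x => F x) z = f z) by (intro z; apply is_derive_unique, dF).
        rewrite !DF. ring. }
    pose proof (log4 f lc fp c x d (Rlt_le _ _ (proj2 Hc2)) H1) as L4.
    replace (x + d) with y in L4 by (unfold d; ring).
    nra. }
  pose proof (HM _ H0) as A1. pose proof (HM _ H2) as A2.
  apply Rabs_def2 in A1. apply Rabs_def2 in A2.
  set (eps := e / (f x + f y)) in *.
  assert (eps * (f x + f y) = e) by (unfold eps; field; lra).
  assert (B1 : - eps * f x < F (s + d) * f x) by (apply Rmult_lt_compat_r; lra).
  assert (B2 : F s * f y < eps * f y) by (apply Rmult_lt_compat_r; lra).
  assert (phi s = F (s + d) * f x - F s * f y) by reflexivity.
  unfold e in *. lra.
Qed.

Section Core.
Variables (F f : R -> R).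
Hypothesis dF : forall x, is_derive F x (f x).
Hypothesis cf : forall x, continuous f x.
Hypothesis fp : forall x, 0 < f x.
Hypothesis lc : log_concave f.
Hypothesis lim : forall eps, 0 < eps -> exists M, forall s, s < M -> Rabs (F s) < eps.

Lemma ratio_le a b : a <= b -> F a / f a <= F b / f b.
Proof.
  intro hab. pose proof (ratio_mono F f dF fp lc lim a b hab).
  pose proof (fp a); pose proof (fp b).
  apply (Rmult_le_reg_r (f a * f b)); [nra|].
  replace (F a / f a * (f a * f b)) with (F a * f b) by (field; lra).
  replace (F b / f b * (f a * f b)) with (F b * f a) by (field; lra). lra.
Qed.

Lemma h_strict t a b : a < b -> t - b - F b / f b < t - a - F a / f a.
Proof. intro hab. pose proof (ratio_le a b (Rlt_le _ _ hab)). lra. Qed.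

Lemma core_exists t : exists! k, k = t - F k / f k.
Proof.
  assert (Ht : 0 < F t / f t).
  { apply Rdiv_lt_0_compat; [apply (Fpos F f dF fp lim)|apply fp]. }
  set (a := t - F t / f t - 1).
  assert (Ha : a < t) by (unfold a; lra).
  assert (Cont : continuity (fun k => - (t - k - F k / f k))).
  { intro k. apply (continuity_pt_opp (fun k => t - k - F k / f k)).
    apply (continuity_pt_minus (fun k => t - k) (fun k => F k / f k)).
    - apply (continuity_pt_minus (fun _ => t) (fun k => k)).
      apply continuity_pt_const. intros u v; reflexivity. apply continuity_pt_id.
    - apply (continuity_pt_div F f).
      + apply continuity_pt_filterlim. apply (ex_derive_continuous (V := R_NormedModule)). exists (f k). apply dF.
      + apply continuity_pt_filterlim. apply cf.
      + pose proof (fp k); lra. }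
  destruct (IVT _ a t Cont Ha) as [z [Hz1 Hz2]].
  - pose proof (ratio_le a t (Rlt_le _ _ Ha)). assert (a + F t / f t = t - 1) by (unfold a; ring). lra.
  - lra.
  - exists z. split; [lra|].
    intros z' Hz'.
    destruct (Rtotal_order z z') as [Hlt|[Heq|Hgt]]; auto.
    + pose proof (h_strict t z z' Hlt). lra.
    + pose proof (h_strict t z' z Hgt). lra.
Qed.

Lemma core_max t k : k = t - F k / f k -> forall k',
  (t - k') * F k' <= (t - k) * F k /\ ((t - k') * F k' = (t - k) * F k -> k' = k).
Proof.
  intros Hk k'.
  assert (Dg : forall c, derivable_pt_lim (fun u => (t - u) * F u) c (f c * (t - c - F c / f c))).
  { intro c. apply is_derive_Reals. auto_derive.
    - exists (f c); apply dF.
    - assert (DF: forall z, Derive (fun x => F x) z = f z) by (intro z; apply is_derive_unique, dF).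
      rewrite !DF. pose proof (fp c). field. lra. }
  destruct (Rtotal_order k' k) as [Hlt|[Heq|Hgt]].
  - destruct (MVT_cor2 _ _ k' k Hlt (fun c _ => Dg c)) as [c [E Hc]].
    pose proof (h_strict t c k (proj2 Hc)). pose proof (fp c).
    assert (0 < f c * (t - c - F c / f c)) by (apply Rmult_lt_0_compat; lra).
    assert (0 < f c * (t - c - F c / f c) * (k - k')) by (apply Rmult_lt_0_compat; lra).
    split; intros; lra.
  - subst. split; intros; lra.
  - destruct (MVT_cor2 _ _ k k' Hgt (fun c _ => Dg c)) as [c [E Hc]].
    pose proof (h_strict t k c (proj1 Hc)). pose proof (fp c).
    assert (0 < f c * - (t - c - F c / f c)) by (apply Rmult_lt_0_compat; lra).
    assert (0 < f c * - (t - c - F c / f c) * (k' - k)) by (apply Rmult_lt_0_compat; lra).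
    split; intros; lra.
Qed.

End Core.

Theorem corollary1 (F f : R -> R) (d1 d0 phi t : R) :
  cdf_with_logconcave_density F f ->
  0 <= d1 <= 1 -> 0 <= d0 <= 1 -> 1 / 2 < phi <= 1 ->
  rho d1 d0 phi <> 0 ->
  0 <= t ->
  ((exists! k0, k0 = t - F k0 / f k0) /\
   (forall k0, k0 = t - F k0 / f k0 ->
      is_unique_maximizer (V0 F t (rho d1 d0 phi)) (k0 / rho d1 d0 phi))) /\
  ((exists! k1, k1 = t + (1 - F k1) / f k1) /\
   (forall k1, k1 = t + (1 - F k1) / f k1 ->
      forall gamma : R,
        is_unique_maximizer (V1 F t (rho d1 d0 phi) gamma) (k1 / rho d1 d0 phi))).
Proof.
  intros [dF [cf [fp [lm [lp lc]]]]] _ _ _ Hrh _.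
  assert (lim : forall eps, 0 < eps -> exists M, forall s, s < M -> Rabs (F s) < eps).
  { intros eps he. apply is_lim_spec in lm.
    destruct (lm (mkposreal eps he)) as [M HM]. exists M. intros s hs.
    pose proof (HM s hs) as H. simpl in H. rewrite Rminus_0_r in H. exact H. }
  set (Ft := fun m => 1 - F (- m)).
  set (ft := fun m => f (- m)).
  assert (dFt : forall x, is_derive Ft x (ft x)).
  { intro x. unfold Ft, ft. auto_derive.
    - exists (f (-x)); apply dF.
    - assert (DF: forall z, Derive (fun x => F x) z = f z) by (intro z; apply is_derive_unique, dF).
      rewrite DF. ring. }
  assert (cft : forall x, continuous ft x).
  { intro x. unfold ft. apply (continuous_comp (fun m => - m) f).
    apply (continuous_opp (fun m : R => m)). apply continuous_id. apply cf. }
  assert (fpt : forall x, 0 < ft x) by (intro x; apply fp).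
  assert (lct : log_concave ft).
  { intros x y l hl. unfold ft.
    replace (- (l * x + (1 - l) * y)) with (l * (- x) + (1 - l) * (- y)) by ring.
    apply lc; exact hl. }
  assert (limt : forall eps, 0 < eps -> exists M, forall s, s < M -> Rabs (Ft s) < eps).
  { intros eps he. apply is_lim_spec in lp.
    destruct (lp (mkposreal eps he)) as [M HM]. exists (- M). intros s hs.
    pose proof (HM (- s) ltac:(lra)) as H. simpl in H. unfold Ft.
    rewrite Rabs_minus_sym. exact H. }
  set (rh := rho d1 d0 phi) in *.
  split; [split|split].
  - apply (core_exists F f dF cf fp lc lim t).
  - intros k0 Hk r'. unfold V0.
    replace (k0 / rh * rh) with k0 by (field; exact Hrh).
    destruct (core_max F f dF fp lc lim t k0 Hk (r' * rh)) as [A B].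
    replace (- r' * rh * F (r' * rh) + t * F (r' * rh)) with ((t - r' * rh) * F (r' * rh)) by ring.
    replace (- (k0 / rh) * rh * F k0 + t * F k0) with ((t - k0) * F k0) by (field; exact Hrh).
    split; [exact A|]. intro E. apply B in E.
    rewrite <- E. field. exact Hrh.
  - destruct (core_exists Ft ft dFt cft fpt lct limt (- t)) as [m [Hm U]].
    exists (- m). unfold Ft, ft in *. split.
    + pose proof (fp m). lra.
    + intros k' Hk'. assert (m = - k').
      { apply U. rewrite Ropp_involutive. lra. }
      lra.
  - intros k1 Hk gamma r'. unfold V1.
    replace (k1 / rh * rh) with k1 by (field; exact Hrh).
    assert (Hm : - k1 = - t - Ft (- k1) / ft (- k1)).
    { unfold Ft, ft. rewrite Ropp_involutive. lra. }
    destruct (core_max Ft ft dFt fpt lct limt (- t) (- k1) Hm (- (r' * rh))) as [A B].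
    unfold Ft in A, B. rewrite !Ropp_involutive in A, B.
    replace (- gamma + r' * rh * (1 - F (r' * rh)) + t * F (r' * rh))
      with (- gamma + t + (- t - - (r' * rh)) * (1 - F (r' * rh))) by ring.
    replace (- gamma + k1 * (1 - F k1) + t * F k1)
      with (- gamma + t + (- t - - k1) * (1 - F k1)) by ring.
    split; [lra|]. intro E.
    assert (E' : - (r' * rh) = - k1) by (apply B; lra).
    replace r' with (r' * rh / rh) by (field; exact Hrh). rewrite <- (Ropp_involutive (r' * rh)), E', Ropp_involutive. reflexivity.
Qed.
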